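(* For any finite interval $\Lambda\subset\mathbb Z$ and any $N\in\{0,1,\dots,N^{\max}_\Lambda\}$ there is a root tiling $R\in\mathcal R_\Lambda$ with $N_\Lambda(R)=N$. Moreover $$\frac13\le\frac{N^{\max}_\Lambda}{|\Lambda|}\le\frac13+\frac{4}{3|\Lambda|},$$ so that $\lim_{|\Lambda|\to\infty}N^{\max}_\Lambda/|\Lambda|=1/3$.
   Context: Tiles on a finite interval $\Lambda$ occupy consecutive sites and carry 0/1 words (particle contents): void $0$; monomer $100$; left boundary dimer $11000$ (allowed only as the first tile of $\Lambda$); and, allowed only as the last tile: right dimer $011$, right 1-monomer $1$, right 2-monomer $10$. A root tiling $R$ of $\Lambda$ is a tiling of $\Lambda$ by consecutive tiles consisting of voids and monomers, optionally with a left boundary dimer as first tile and optionally with one of right dimer, right 1-monomer, right 2-monomer as last tile; $\mathcal R_\Lambda$ is the set of root tilings. $N_\Lambda(R)$ is the total number of $1$'s in the concatenated particle content of $R$, and $N^{\max}_\Lambda=\max\{N_\Lambda(R):R\in\mathcal R_\Lambda\}$. *)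

(* Defs.v *)
From mathcomp Require Import all_boot all_order all_algebra.
Set Implicit Arguments. Unset Strict Implicit. Unset Printing Implicit Defensive.

(* Tiles and their particle contents (0/1 words, with 1 = true). *)
Inductive tile : Type :=
| Void
| Mono
| LDimer
| RDimer
| RMono1
| RMono2.

Definition content (t : tile) : seq bool :=
  match t with
  | Void => [:: false]
  | Mono => [:: true; false; false]
  | LDimer => [:: true; true; false; false; false]
  | RDimer => [:: false; true; true]
  | RMono1 => [:: true]
  | RMono2 => [:: true; false]
  end.

Definition tlen (t : tile) : nat := size (content t).

Definition is_bulk (t : tile) : bool :=
  match t with Void | Mono => true | _ => false end.

Definition is_right (t : tile) : bool :=
  match t with RDimer | RMono1 | RMono2 => true | _ => false end.

(* The finite interval Lambda = {a, a+1, ..., b} of Z (a <= b); its cardinality. *)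
Definition interval_card (a b : int) : nat := (absz (b - a)%R).+1.

(* R is a root tiling of Lambda = [a,b]: a sequence of consecutive tiles
   (placed left to right starting at a) covering Lambda exactly, consisting of
   voids and monomers, optionally preceded by a left boundary dimer and
   optionally followed by one right boundary tile. *)
Definition root_tiling (a b : int) (R : seq tile) : Prop :=
  exists (l : option tile) (M : seq tile) (r : option tile),
    [/\ R = (if l is Some t then [:: t] else [::]) ++ M
              ++ (if r is Some t then [:: t] else [::]),
        l = None \/ l = Some LDimer,
        (if r is Some t then is_right t else true),
        all is_bulk M
      & sumn (map tlen R) = interval_card a b].

Definition Ncount (R : seq tile) : nat := count id (flatten (map content R)).

Definition is_Nmax (a b : int) (M : nat) : Prop :=
  (exists R, root_tiling a b R /\ Ncount R = M) /\
  (forall R, root_tiling a b R -> Ncount R <= M).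

(* Main.v *)
Require Import Defs.
From mathcomp Require Import all_boot all_order all_algebra.
From mathcomp Require Import zify ring lra.
From Stdlib Require Import Classical.
Import Order.TTheory GRing.Theory Num.Theory.
Set Implicit Arguments. Unset Strict Implicit.

Definition ones (t : tile) : nat := count id (content t).

Lemma Ncount_sum R : Ncount R = sumn (map ones R).
Proof. elim: R => //= t R IH; by rewrite /Ncount /= count_cat -IH. Qed.

Lemma bulk_ub M : all is_bulk M -> 3 * sumn (map ones M) <= sumn (map tlen M).
Proof.
elim: M => //= t M IH /andP[bt bM]; have := IH bM.
case: t bt => //= _; rewrite /ones /tlen /=; lia.
Qed.

Lemma root_ub a b R : root_tiling a b R -> 3 * Ncount R <= interval_card a b + 4.
Proof.
case=> l [M [r [eR hl hr hM hs]]]; rewrite -hs eR; clear eR hs.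
rewrite Ncount_sum !map_cat !sumn_cat; have := bulk_ub hM.
case: hl => ->; case: r hr => [t|] //=; try case: t => //=; rewrite /ones /tlen /=; lia.
Qed.

Lemma bulk_dec M : all is_bulk M -> 0 < sumn (map ones M) ->
  exists M', [/\ all is_bulk M', sumn (map tlen M') = sumn (map tlen M) &
             sumn (map ones M') = (sumn (map ones M)).-1].
Proof.
elim: M => //= t M IH /andP[bt bM]; case: t bt => //= _.
- rewrite {1}/ones /= add0n => /(IH bM) [M' [h1 h2 h3]].
  exists (Void :: M'); split => //=; rewrite ?h2 ?h3 /ones /=; lia.
- move=> _; exists [:: Void, Void, Void & M]; split => //=; rewrite /ones /tlen /=; lia.
Qed.

Lemma root_dec a b R : root_tiling a b R -> 0 < Ncount R ->
  exists R', root_tiling a b R' /\ Ncount R' = (Ncount R).-1.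
Proof.
case=> l [M [r [-> hl hr hM hs]]]; rewrite Ncount_sum => hpos.
case: hl => hl; subst l.
- case: r hr hs hpos => [t|] hr hs hpos.
  + case: t hr hs hpos => //= _ hs hpos.
    * exists (M ++ [:: Mono]); split; last first.
        rewrite !Ncount_sum !map_cat !sumn_cat /= /ones /=; lia.
      exists None, (M ++ [:: Mono]), None; split => //=; first by rewrite cats0.
        by left. by rewrite all_cat hM.
      move: hs; rewrite /= !map_cat !sumn_cat /tlen /=; lia.
    * exists (M ++ [:: Void]); split; last first.
        rewrite !Ncount_sum !map_cat !sumn_cat /= /ones /=; lia.
      exists None, (M ++ [:: Void]), None; split => //=; first by rewrite cats0.
        by left. by rewrite all_cat hM.
      move: hs; rewrite /= !map_cat !sumn_cat /tlen /=; lia.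
    * exists (M ++ [:: Void; Void]); split; last first.
        rewrite !Ncount_sum !map_cat !sumn_cat /= /ones /=; lia.
      exists None, (M ++ [:: Void; Void]), None; split => //=; first by rewrite cats0.
        by left. by rewrite all_cat hM.
      move: hs; rewrite /= !map_cat !sumn_cat /tlen /=; lia.
  + move: hs hpos; rewrite /= !cats0 => hs hpos.
    have [M' [h1 h2 h3]] := bulk_dec hM hpos.
    exists M'; split; last by rewrite Ncount_sum ?cats0 h3.
    exists None, M', None; split => //=; first by rewrite cats0.
      by left. by rewrite h2.
- exists ([:: Mono, Void, Void & M] ++ (if r is Some t then [:: t] else [::])).
  split; last first.
    move: hpos; rewrite !Ncount_sum /= !map_cat !sumn_cat /= /ones /=; lia.
  exists None, [:: Mono, Void, Void & M], r; split => //=; try by left.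
Qed.

Lemma nseq_mono q : sumn (map tlen (nseq q Mono)) = 3 * q /\ sumn (map ones (nseq q Mono)) = q.
Proof. elim: q => //= q [-> ->]; rewrite /tlen /ones /=; lia. Qed.

Lemma root_lb a b : exists R, root_tiling a b R /\ interval_card a b <= 3 * Ncount R.
Proof.
set n := interval_card a b.
have hn : n = 3 * (n %/ 3) + n %% 3 by rewrite mulnC -divn_eq.
have [h1 h2] := nseq_mono (n %/ 3).
have : n %% 3 < 3 by rewrite ltn_mod.
case hm: (n %% 3) => [|[|[|k]]] // _.
- exists (nseq (n %/ 3) Mono); split.
    exists None, (nseq (n %/ 3) Mono), None; split => //=; first by rewrite cats0.
      by left. by rewrite all_nseq orbT. lia.
  rewrite Ncount_sum h2; lia.
- exists (nseq (n %/ 3) Mono ++ [:: RMono1]); split.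
    exists None, (nseq (n %/ 3) Mono), (Some RMono1); split => //=.
      by left. by rewrite all_nseq orbT. rewrite map_cat sumn_cat h1 /tlen /=; lia.
  rewrite Ncount_sum map_cat sumn_cat h2 /ones /=; lia.
- exists (nseq (n %/ 3) Mono ++ [:: RMono2]); split.
    exists None, (nseq (n %/ 3) Mono), (Some RMono2); split => //=.
      by left. by rewrite all_nseq orbT. rewrite map_cat sumn_cat h1 /tlen /=; lia.
  rewrite Ncount_sum map_cat sumn_cat h2 /ones /=; lia.
Qed.

Lemma max_exists (P : nat -> Prop) (B k : nat) : P k -> (forall N, P N -> N <= B) ->
  exists M, P M /\ forall N, P N -> N <= M.
Proof.
move=> Pk hB.
suff: forall d k, P k -> B - k <= d -> exists M, P M /\ forall N, P N -> N <= M.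
  by move/(_ (B - k) k Pk (leqnn _)).
elim=> [|d IH] j Pj hd.
- exists j; split => // N /hB; lia.
- case: (classic (exists N, P N /\ j < N)) => [[N [PN hN]]|hno].
  + apply: (IH N PN); have := hB _ PN; lia.
  + exists j; split => // N PN; case: (leqP N j) => // hlt.
    by exfalso; apply: hno; exists N.
Qed.

Lemma Nmax_bounds a b M : is_Nmax a b M ->
  interval_card a b <= 3 * M /\ 3 * M <= interval_card a b + 4.
Proof.
case=> [[R [hR <-]] hall]; split; last exact: root_ub.
have [R' [hR' hl]] := root_lb a b; have := hall _ hR'; lia.
Qed.

Lemma Nmax_ex a b : exists M, is_Nmax a b M.
Proof.
have [R [hR _]] := root_lb a b.
have [M [[R0 [h0 e0]] hM]] := @max_exists (fun N => exists R, root_tiling a b R /\ Ncount R = N)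
   (interval_card a b + 4) (Ncount R) (ex_intro _ R (conj hR erefl))
   (fun N '(ex_intro R (conj h e)) => ltac:(have := root_ub h; lia)).
exists M; split; first by exists R0.
by move=> R1 h1; apply: hM; exists R1.
Qed.

Lemma Nmax_all a b M : is_Nmax a b M -> forall N, N <= M -> exists R, root_tiling a b R /\ Ncount R = N.
Proof.
case=> [[R [hR eR]] _].
suff H : forall k, k <= M -> exists R, root_tiling a b R /\ Ncount R = M - k.
  move=> N hN; have [R1 [h1 e1]] := H (M - N) (leq_subr _ _).
  by exists R1; split => //; rewrite e1; lia.
elim=> [|k IH] hk; first by exists R; rewrite subn0.
have [R1 [h1 e1]] := IH (ltnW hk).
have [R2 [h2 e2]] := root_dec h1 (ltac:(rewrite e1; lia)).
by exists R2; split => //; rewrite e2 e1; lia.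
Qed.
Section RatPart.
Local Open Scope ring_scope.

Lemma rat_bounds (M n : nat) : (0 < n)%N -> (n <= 3 * M)%N -> (3 * M <= n + 4)%N ->
  (1 / 3 : rat) <= (M%:R : rat) / n%:R <= 1 / 3 + 4 / (3 * n%:R) /\
  (M%:R : rat) / n%:R - 1 / 3 <= 4 / (3 * n%:R).
Proof.
move=> n0 h1 h2.
have hn : (0 : rat) < n%:R by rewrite ltr0n.
have h1' : (n%:R : rat) <= 3 * M%:R by rewrite -natrM ler_nat.
have h2' : (3 * M%:R : rat) <= n%:R + 4 by rewrite -natrM -(natrD _ n 4) ler_nat.
have e1 : (M%:R : rat) / n%:R - 1 / 3 = (3 * M%:R - n%:R) / (3 * n%:R).
  by field; rewrite gt_eqF.
have A : 0 <= (M%:R : rat) / n%:R - 1 / 3.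
  by rewrite e1 divr_ge0 // ?subr_ge0 // mulr_ge0 // ltW.
have B : (M%:R : rat) / n%:R - 1 / 3 <= 4 / (3 * n%:R).
  rewrite e1 ler_pM2r ?invr_gt0 ?mulr_gt0 //; lra.
split => //; apply/andP; split; lra.
Qed.
End RatPart.
Theorem lemma2p5 :
  (forall (a b : int), (a <= b)%R ->
     (* N^max_Lambda exists (the maximum is attained) *)
     (exists M : nat, is_Nmax a b M) /\
     forall M : nat, is_Nmax a b M ->
       (forall N : nat, N <= M -> exists R, root_tiling a b R /\ Ncount R = N) /\
       ((1 / 3 : rat) <= (M%:R : rat) / (interval_card a b)%:R <=
          1 / 3 + 4 / (3 * (interval_card a b)%:R))%R) /\
  (* lim_{|Lambda| -> oo} N^max_Lambda / |Lambda| = 1/3 *)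
  (forall eps : rat, (0 < eps)%R ->
     exists K : nat, forall (a b : int) (M : nat),
       (a <= b)%R -> K <= interval_card a b -> is_Nmax a b M ->
       (`|(M%:R : rat) / (interval_card a b)%:R - 1 / 3| < eps)%R).
Proof.
split.
  move=> a b _; split; first exact: Nmax_ex.
  move=> M hM; split; first exact: Nmax_all.
  have [h1 h2] := Nmax_bounds hM.
  by have [] := rat_bounds (ltn0Sn _) h1 h2.
move=> eps he.
have hx0 : ((0 : rat) <= 4 / (3 * eps))%R by rewrite divr_ge0 // mulr_ge0 // ltW.
exists (Num.Def.archi_bound (4 / (3 * eps))%R) => a b M _ hK hM.
have [h1 h2] := Nmax_bounds hM.
have [/andP[A _] B] := rat_bounds (ltn0Sn _) h1 h2.
set n := interval_card a b in hK A B *.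
have hx := archi_boundP hx0.
have hn : ((4 / (3 * eps) : rat) < n%:R)%R.
  by apply: (lt_le_trans hx); rewrite ler_nat.
have n0 : ((0 : rat) < n%:R)%R by apply: le_lt_trans hn.
rewrite ltr_pdivrMr ?mulr_gt0 // in hn.
rewrite ger0_norm; last by rewrite subr_ge0.
apply: (le_lt_trans B); rewrite ltr_pdivrMr ?mulr_gt0 //.
have -> : (eps * (3 * n%:R) = n%:R * (3 * eps))%R by ring.
exact: hn.
Qed.
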